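(* Let $G=(V,E)$ be a finite connected undirected unweighted graph, let $\lambda\in[0,1]$, $r>0$, and $S\subseteq V$. If $r\ge 1$ then $\mathrm{fp}^{\lambda,r}_G(S)\ge \mathrm{fp}^{\lambda,1}_G(S)$, and if $r\le 1$ then $\mathrm{fp}^{\lambda,r}_G(S)\le \mathrm{fp}^{\lambda,1}_G(S)$.
   Context: The $\lambda$-mixed Moran process on a connected graph $G=(V,E)$ with $n=|V|\ge 2$ vertices: each vertex hosts either a resident (fitness $1$) or a mutant (fitness $r>0$); the state is the set $S_t\subseteq V$ of mutant vertices. $N(u)$ is the neighbor set of $u$. At each step, independently: with probability $\lambda$ a Birth-death step occurs (a vertex $u$ is chosen with probability proportional to its fitness among all vertices, then a uniformly random neighbor $v\in N(u)$ takes the type of $u$); with probability $1-\lambda$ a death-Birth step occurs (a uniformly random vertex $v$ dies, then a neighbor $u\in N(v)$ is chosen with probability proportional to fitness among $N(v)$, and $v$ takes the type of $u$). $\mathrm{fp}^{\lambda,r}_G(S)$ is the probability that, starting from $S_0=S$, the process reaches $S_t=V$. *)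

(* Defs.v *)
From HB Require Import structures.
From mathcomp Require Import all_boot all_order all_algebra.
From mathcomp Require Import all_classical all_reals topology normedtype sequences.
Set Implicit Arguments. Unset Strict Implicit. Unset Printing Implicit Defensive.
Import Order.TTheory GRing.Theory Num.Theory.
Import numFieldNormedType.Exports.
Local Open Scope ring_scope.

Definition simple_graph (V : finType) (e : rel V) : Prop :=
  symmetric e /\ irreflexive e.

Definition graph_connected (V : finType) (e : rel V) : Prop :=
  forall x y : V, connect e x y.

Definition nbhd (V : finType) (e : rel V) (u : V) : {set V} := [set v | e u v].

Section Moran.
Variables (R : realType) (V : finType) (e : rel V) (lam r : R).

(* fitness of vertex x in state S (S = set of mutants) *)
Definition fitness (S : {set V}) (x : V) : R := if x \in S then r else 1.

Definition upd (S : {set V}) (u v : V) : {set V} :=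
  if u \in S then v |: S else S :\ v.

Definition moran_step (S S' : {set V}) : R :=
  lam * (\sum_(u : V) (fitness S u / \sum_(w : V) fitness S w) *
           \sum_(v in nbhd e u) (#|nbhd e u|%:R)^-1 *
              (upd S u v == S')%:R)
  + (1 - lam) * (\sum_(v : V) (#|V|%:R)^-1 *
           \sum_(u in nbhd e v)
              (fitness S u / \sum_(w in nbhd e v) fitness S w) *
              (upd S u v == S')%:R).

Fixpoint moran_dist (S : {set V}) (t : nat) : {set V} -> R :=
  match t with
  | 0 => fun B => (B == S)%:R
  | t.+1 => fun B => \sum_(A : {set V}) moran_dist S t A * moran_step A B
  end.

(* fixation probability: probability that the process ever reaches S_t = V.
   Since V is absorbing, this is the limit of P(S_t = V) as t -> oo. *)
Definition fp (S : {set V}) : R := limn (fun t => moran_dist S t [set: V]).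

End Moran.

(* Main.v *)
Require Import Defs.
From HB Require Import structures.
From mathcomp Require Import all_boot all_order all_algebra.
From mathcomp Require Import all_classical all_reals topology normedtype sequences.
From mathcomp Require Import ring lra.
Import Order.TTheory GRing.Theory Num.Theory.
Import numFieldNormedType.Exports.
Local Open Scope ring_scope.

Section Proof.
Variables (R : realType) (V : finType) (e : rel V) (lam : R).
Hypothesis hlam0 : 0 <= lam.
Hypothesis hlam1 : lam <= 1.
Hypothesis hnb : forall u : V, (0 < #|nbhd e u|)%N.
Hypothesis hn : (0 < #|V|)%N.

Definition Bd (r : R) (A : {set V}) (u v : V) : R :=
  if v \in nbhd e u then fitness r A u / (\sum_(w : V) fitness r A w) *
     (#|nbhd e u|%:R)^-1 else 0.
Definition dB (r : R) (A : {set V}) (u v : V) : R :=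
  if u \in nbhd e v then (#|V|%:R)^-1 *
     (fitness r A u / \sum_(w in nbhd e v) fitness r A w) else 0.
Definition Q r A u v := lam * Bd r A u v + (1 - lam) * dB r A u v.

Lemma moran_stepE r A B : moran_step e lam r A B =
  \sum_u \sum_v Q r A u v * (upd A u v == B)%:R.
Proof.
have -> : \sum_u \sum_v Q r A u v * (upd A u v == B)%:R =
   lam * (\sum_u \sum_v Bd r A u v * (upd A u v == B)%:R) +
   (1 - lam) * (\sum_u \sum_v dB r A u v * (upd A u v == B)%:R).
  rewrite !mulr_sumr -big_split; apply eq_bigr => u _.
  rewrite !mulr_sumr -big_split; apply eq_bigr => v _; rewrite /Q /=; ring.
rewrite /moran_step; congr (_ * _ + _ * _).
  apply eq_bigr => u _; rewrite mulr_sumr big_mkcond; apply eq_bigr => v _.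
  by rewrite /Bd; case: ifP => _; [rewrite mulrA | rewrite mul0r].
rewrite exchange_big /=; apply eq_bigr => v _; rewrite mulr_sumr big_mkcond.
apply eq_bigr => u _.
by rewrite /dB; case: ifP => _; [rewrite mulrA | rewrite mul0r].
Qed.

Lemma step_sum r A (h : {set V} -> R) :
  \sum_B moran_step e lam r A B * h B = \sum_u \sum_v Q r A u v * h (upd A u v).
Proof.
rewrite (eq_bigr (fun B => \sum_u \sum_v Q r A u v * (upd A u v == B)%:R * h B));
  last first.
  by move=> B _; rewrite moran_stepE big_distrl; apply eq_bigr => u _; rewrite big_distrl.
rewrite exchange_big; apply eq_bigr => u _; rewrite exchange_big; apply eq_bigr => v _.
rewrite (bigD1 (upd A u v)) //= eqxx mulr1 big1 ?addr0 // => B hB.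
by rewrite eq_sym (negbTE hB) mulr0 mul0r.
Qed.

Lemma distS r S t B : moran_dist e lam r S t.+1 B =
  \sum_A moran_dist e lam r S t A * moran_step e lam r A B.
Proof. by []. Qed.

Lemma dist_back r t S B : moran_dist e lam r S t.+1 B =
  \sum_A moran_step e lam r S A * moran_dist e lam r A t B.
Proof.
elim: t S B => [|t IH] S B.
  rewrite distS (bigD1 S) //= eqxx mul1r big1 ?addr0; last first.
    by move=> A /negbTE ->; rewrite mul0r.
  rewrite (bigD1 B) //= eqxx mulr1 big1 ?addr0 // => A hA.
  by rewrite eq_sym (negbTE hA) mulr0.
rewrite distS (eq_bigr (fun C => \sum_A moran_step e lam r S A *
   moran_dist e lam r A t C * moran_step e lam r C B)); last first.
  by move=> C _; rewrite IH big_distrl.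
rewrite exchange_big; apply eq_bigr => A _; rewrite distS mulr_sumr.
by apply eq_bigr => C _; rewrite mulrA.
Qed.

Definition g r t A := moran_dist e lam r A t [set: V].

Lemma gS r t A : g r t.+1 A = \sum_u \sum_v Q r A u v * g r t (upd A u v).
Proof.
by rewrite /g dist_back (step_sum r A (fun B => moran_dist e lam r B t [set: V])).
Qed.

Lemma fitness_gt0 (r : R) (A : {set V}) w : 0 < r -> 0 < fitness r A w.
Proof. by move=> hr; rewrite /fitness; case: ifP. Qed.

Lemma fitness1 (A B : {set V}) : fitness (1 : R) A = fitness 1 B.
Proof. by apply/funext => w; rewrite /fitness !if_same. Qed.

Lemma Q_ge0 (r : R) (A : {set V}) (u v : V) : 0 < r -> 0 <= Q r A u v.
Proof.
move=> hr; rewrite /Q; apply: addr_ge0; apply: mulr_ge0; rewrite ?subr_ge0 //.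
  rewrite /Bd; case: ifP => // _; apply: mulr_ge0; last by rewrite invr_ge0.
  apply: divr_ge0; first exact: ltW (fitness_gt0 _ _ _ hr).
  by apply: sumr_ge0 => w _; apply: ltW (fitness_gt0 _ _ _ hr).
rewrite /dB; case: ifP => // _; apply: mulr_ge0; first by rewrite invr_ge0.
apply: divr_ge0; first exact: ltW (fitness_gt0 _ _ _ hr).
by apply: sumr_ge0 => w _; apply: ltW (fitness_gt0 _ _ _ hr).
Qed.

Lemma sum_fit_gt0 (r : R) (A : {set V}) (P : pred V) w0 : 0 < r -> P w0 ->
  0 < \sum_(w | P w) fitness r A w.
Proof.
move=> hr hw0; rewrite (bigD1 w0) //=.
have h1 := fitness_gt0 r A w0 hr.
have : 0 <= \sum_(w | P w && (w != w0)) fitness r A w.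
  by apply: sumr_ge0 => w _; apply: ltW (fitness_gt0 _ _ _ hr).
lra.
Qed.

Lemma Qsum1 (r : R) (A : {set V}) : 0 < r -> \sum_u \sum_v Q r A u v = 1.
Proof.
move=> hr.
have hBd : \sum_u \sum_v Bd r A u v = 1.
  have E : forall u, \sum_v Bd r A u v = fitness r A u / \sum_(w : V) fitness r A w.
    move=> u.
    have -> : \sum_v Bd r A u v = \sum_(v in nbhd e u)
       (fitness r A u / (\sum_(w : V) fitness r A w) * (#|nbhd e u|%:R)^-1).
      by rewrite [RHS]big_mkcond; apply eq_bigr => v _; rewrite /Bd.
    rewrite sumr_const -mulrnAr -[_^-1 *+ _]mulr_natr mulVf ?mulr1 //.
    by rewrite pnatr_eq0 -lt0n hnb.
  rewrite (eq_bigr _ (fun u _ => E u)) -mulr_suml divff //.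
  have [w0 _] : exists w0 : V, true by case/card_gt0P: hn => w0; exists w0.
  rewrite gt_eqF //; exact: (sum_fit_gt0 r A (fun _ => true) w0 hr isT).
have hdB : \sum_u \sum_v dB r A u v = 1.
  rewrite exchange_big /=.
  have E : forall v, \sum_u dB r A u v = (#|V|%:R)^-1.
    move=> v.
    have -> : \sum_u dB r A u v = \sum_(u in nbhd e v)
       (#|V|%:R)^-1 * (fitness r A u / \sum_(w in nbhd e v) fitness r A w).
      by rewrite [RHS]big_mkcond; apply eq_bigr => u _; rewrite /dB.
    rewrite -mulr_sumr -mulr_suml divff ?mulr1 //.
    case/card_gt0P: (hnb v) => w0 hw0.
    rewrite gt_eqF //; exact: (sum_fit_gt0 r A (fun w => w \in nbhd e v) w0 hr hw0).
  rewrite (eq_bigr _ (fun v _ => E v)) sumr_const -[_^-1 *+ _]mulr_natr mulVf //.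
  by rewrite pnatr_eq0 -lt0n hn.
have -> : \sum_u \sum_v Q r A u v =
   lam * (\sum_u \sum_v Bd r A u v) + (1 - lam) * (\sum_u \sum_v dB r A u v).
  rewrite !mulr_sumr -big_split; apply eq_bigr => u _.
  by rewrite !mulr_sumr -big_split.
rewrite hBd hdB; ring.
Qed.

Lemma fit_cmp (r : R) (P : pred V) (A : {set V}) (u w0 : V) : 0 < r -> P w0 ->
  (u \in A -> 0 <= (r - 1) * (fitness r A u / \sum_(w | P w) fitness r A w
                   - fitness 1 A u / \sum_(w | P w) fitness 1 A w)) /\
  (u \notin A -> (r - 1) * (fitness r A u / \sum_(w | P w) fitness r A w
                   - fitness 1 A u / \sum_(w | P w) fitness 1 A w) <= 0).
Proof.
move=> hr hw0.
have fr1 : forall w, fitness (1 : R) A w = 1 by move=> w; rewrite /fitness if_same.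
have Fpos := sum_fit_gt0 r A P w0 hr hw0.
have dpos := sum_fit_gt0 1 A P w0 (ltr01 : (0 : R) < 1) hw0.
set F := \sum_(w | P w) fitness r A w in Fpos *.
set d := \sum_(w | P w) fitness 1 A w in dpos *.
have key1 : 0 <= (r - 1) * (r * d - F).
  have -> : (r - 1) * (r * d - F) = \sum_(w | P w) (r - 1) * (r - fitness r A w).
    rewrite /d /F mulr_sumr -sumrB mulr_sumr; apply eq_bigr => w _.
    by rewrite fr1 mulr1.
  apply: sumr_ge0 => w _; rewrite /fitness; case: ifP => _; first by rewrite subrr mulr0.
  by rewrite -expr2 sqr_ge0.
have key2 : (r - 1) * (d - F) <= 0.
  have -> : (r - 1) * (d - F) = \sum_(w | P w) (r - 1) * (1 - fitness r A w).
    rewrite /d /F -sumrB mulr_sumr; apply eq_bigr => w _.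
    by rewrite fr1.
  apply: sumr_le0 => w _; rewrite /fitness; case: ifP => _; last by rewrite subrr mulr0.
  by rewrite -[1 - r]opprB mulrN oppr_le0 -expr2 sqr_ge0.
have Fn0 : F != 0 by rewrite gt_eqF.
have dn0 : d != 0 by rewrite gt_eqF.
have Fd : 0 < F * d by apply: mulr_gt0.
split => hu.
  have -> : fitness r A u = r by rewrite /fitness hu.
  rewrite fr1.
  have -> : (r - 1) * (r / F - 1 / d) = ((r - 1) * (r * d - F)) / (F * d).
    by field; rewrite Fn0 dn0.
  by apply: divr_ge0 => //; apply: ltW.
have -> : fitness r A u = 1 by rewrite /fitness (negbTE hu).
rewrite fr1.
have -> : (r - 1) * (1 / F - 1 / d) = ((r - 1) * (d - F)) / (F * d).
  by field; rewrite Fn0 dn0.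
by apply: mulr_le0_ge0 => //; rewrite invr_ge0 ltW.
Qed.

Lemma Q_cmp (r : R) (A : {set V}) (u v : V) : 0 < r ->
  (u \in A -> 0 <= (r - 1) * (Q r A u v - Q 1 A u v)) /\
  (u \notin A -> (r - 1) * (Q r A u v - Q 1 A u v) <= 0).
Proof.
move=> hr.
have -> : (r - 1) * (Q r A u v - Q 1 A u v) =
   lam * ((r - 1) * (Bd r A u v - Bd 1 A u v)) +
   (1 - lam) * ((r - 1) * (dB r A u v - dB 1 A u v)) by rewrite /Q; ring.
have hB : (u \in A -> 0 <= (r - 1) * (Bd r A u v - Bd 1 A u v)) /\
          (u \notin A -> (r - 1) * (Bd r A u v - Bd 1 A u v) <= 0).
  rewrite /Bd; case: ifP => _; last by rewrite subrr mulr0.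
  have [h1 h2] := fit_cmp r (fun _ => true) A u u hr isT.
  set c := (#|nbhd e u|%:R)^-1.
  have c0 : 0 <= c by rewrite invr_ge0.
  split => hu.
    have := h1 hu; nra.
  have := h2 hu; nra.
have hD : (u \in A -> 0 <= (r - 1) * (dB r A u v - dB 1 A u v)) /\
          (u \notin A -> (r - 1) * (dB r A u v - dB 1 A u v) <= 0).
  rewrite /dB; case: ifP => hv; last by rewrite subrr mulr0.
  have [h1 h2] := fit_cmp r (fun w => w \in nbhd e v) A u u hr hv.
  set c := (#|V|%:R)^-1.
  have c0 : 0 <= c by rewrite invr_ge0.
  split => hu.
    have := h1 hu; nra.
  have := h2 hu; nra.
case: hB => hB1 hB2; case: hD => hD1 hD2.
split => hu.
  by apply: addr_ge0; apply: mulr_ge0; rewrite ?subr_ge0 ?(hB1 hu) ?(hD1 hu).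
have l1 : 0 <= 1 - lam by rewrite subr_ge0.
have := mulr_ge0_le0 hlam0 (hB2 hu); have := mulr_ge0_le0 l1 (hD2 hu).
lra.
Qed.

Lemma sum2B (F G : V -> V -> R) :
  \sum_u \sum_v F u v - \sum_u \sum_v G u v = \sum_u \sum_v (F u v - G u v).
Proof. by rewrite -sumrB; apply eq_bigr => u _; rewrite -sumrB. Qed.

Lemma sum2_mul c (F : V -> V -> R) :
  c * \sum_u \sum_v F u v = \sum_u \sum_v c * F u v.
Proof. by rewrite mulr_sumr; apply eq_bigr => u _; rewrite mulr_sumr. Qed.

Lemma one_step (r : R) (A : {set V}) (h : {set V} -> R) : 0 < r ->
  (forall X Y : {set V}, X \subset Y -> h X <= h Y) ->
  0 <= (r - 1) * (\sum_u \sum_v Q r A u v * h (upd A u v)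
                  - \sum_u \sum_v Q 1 A u v * h (upd A u v)).
Proof.
move=> hr hmono.
have -> : \sum_u \sum_v Q r A u v * h (upd A u v)
          - \sum_u \sum_v Q 1 A u v * h (upd A u v) =
  (\sum_u \sum_v Q r A u v * h (upd A u v)
          - \sum_u \sum_v Q 1 A u v * h (upd A u v))
  - h A * (\sum_u \sum_v Q r A u v - \sum_u \sum_v Q 1 A u v).
  by rewrite !Qsum1 // subrr mulr0 subr0.
rewrite !sum2B sum2_mul sum2B sum2_mul.
apply: sumr_ge0 => u _; apply: sumr_ge0 => v _.
have -> : (r - 1) * (Q r A u v * h (upd A u v) - Q 1 A u v * h (upd A u v) -
     h A * (Q r A u v - Q 1 A u v)) =
   ((r - 1) * (Q r A u v - Q 1 A u v)) * (h (upd A u v) - h A) by ring.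
have [h1 h2] := Q_cmp r A u v hr.
case: (boolP (u \in A)) => hu.
  apply: mulr_ge0; first exact: h1.
  rewrite subr_ge0; apply: hmono; rewrite /upd hu; exact: finset.subsetUr.
apply: mulr_le0; first exact: h2.
rewrite subr_le0; apply: hmono; rewrite /upd (negbTE hu); exact: subsetDl.
Qed.

Lemma upd_mono (X Y : {set V}) (u v : V) : X \subset Y -> upd X u v \subset upd Y u v.
Proof.
move=> hXY; rewrite /upd; case: ifP => hX.
  by rewrite (fintype.subsetP hXY _ hX); apply: finset.setUS.
case: ifP => hY.
  exact: fintype.subset_trans (subsetDl X [set v]) (fintype.subset_trans hXY (finset.subsetUr _ _)).
exact: finset.setSD.
Qed.

Lemma g1_mono t (X Y : {set V}) : X \subset Y -> g 1 t X <= g 1 t Y.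
Proof.
elim: t X Y => [|t IH] X Y hXY.
  rewrite /g /=; case: (eqVneq [set: V] X) => [hX|_]; last by rewrite ler0n.
  have -> : [set: V] == Y by rewrite finset.eqEsubset finset.subsetT andbT hX.
  by [].
rewrite !gS; apply: ler_sum => u _; apply: ler_sum => v _.
have -> : Q 1 X u v = Q 1 Y u v by rewrite /Q /Bd /dB (fitness1 X Y).
apply: ler_wpM2l; first exact: Q_ge0.
by apply: IH; apply: upd_mono.
Qed.

Lemma main_ind (r : R) t (A : {set V}) : 0 < r -> 0 <= (r - 1) * (g r t A - g 1 t A).
Proof.
move=> hr; elim: t A => [|t IH] A; first by rewrite /g /= subrr mulr0.
rewrite !gS.
set a := \sum_u \sum_v Q r A u v * g r t (upd A u v).
set b := \sum_u \sum_v Q r A u v * g 1 t (upd A u v).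
set c := \sum_u \sum_v Q 1 A u v * g 1 t (upd A u v).
have -> : a - c = (a - b) + (b - c) by rewrite addrA subrK.
rewrite mulrDr; apply: addr_ge0.
  rewrite /a /b sum2B sum2_mul; apply: sumr_ge0 => u _; apply: sumr_ge0 => v _.
  rewrite -mulrBr mulrCA; apply: mulr_ge0; [exact: Q_ge0 | exact: IH].
apply: one_step => // X Y; exact: g1_mono.
Qed.

Lemma g_ge0 (r : R) t (A : {set V}) : 0 < r -> 0 <= g r t A.
Proof.
move=> hr; elim: t A => [|t IH] A; first by rewrite /g /= ler0n.
rewrite gS; apply: sumr_ge0 => u _; apply: sumr_ge0 => v _.
apply: mulr_ge0; [exact: Q_ge0 | exact: IH].
Qed.

Lemma g_le1 (r : R) t (A : {set V}) : 0 < r -> g r t A <= 1.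
Proof.
move=> hr; elim: t A => [|t IH] A.
  by rewrite /g /=; case: (_ == _); rewrite ?ler01.
rewrite gS -(Qsum1 r A hr); apply: ler_sum => u _; apply: ler_sum => v _.
have := Q_ge0 r A u v hr; have := IH (upd A u v); nra.
Qed.

Lemma updT u v : upd [set: V] u v = [set: V].
Proof. by rewrite /upd finset.in_setT; apply/finset.setP => x; rewrite !inE orbT. Qed.

Lemma g_incr (r : R) t (A : {set V}) : 0 < r -> g r t A <= g r t.+1 A.
Proof.
move=> hr; elim: t A => [|t IH] A.
  case: (eqVneq A [set: V]) => [->|hA].
    rewrite gS (eq_bigr (fun u => \sum_v Q r [set: V] u v)).
      by rewrite Qsum1 // /g /= eqxx.
    move=> u _; apply: eq_bigr => v _; by rewrite updT /g /= eqxx mulr1.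
  have -> : g r 0 A = 0 by rewrite /g /= eq_sym (negbTE hA).
  exact: g_ge0.
rewrite (gS r t.+1) (gS r t); apply: ler_sum => u _; apply: ler_sum => v _.
apply: ler_wpM2l; [exact: Q_ge0 | exact: IH].
Qed.

Lemma g_cvg (r : R) (A : {set V}) : 0 < r -> cvgn (fun t => g r t A).
Proof.
move=> hr; apply/cvg_ex; eexists; apply: nondecreasing_cvgn.
  move=> m n /subnK <-; elim: (n - m)%N => [|k IHk] //=.
  by apply: le_trans IHk (g_incr r _ A hr).
exists 1 => x [t _ <-]; exact: g_le1.
Qed.

End Proof.

Theorem mainTheorem2 (R : realType) (V : finType) (e : rel V)
  (lam r : R) (S : {set V}) :
  simple_graph e -> graph_connected e -> (2 <= #|V|)%N ->
  0 <= lam <= 1 -> 0 < r ->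
  (1 <= r -> fp e lam 1 S <= fp e lam r S) /\
  (r <= 1 -> fp e lam r S <= fp e lam 1 S).
Proof.
move=> _ hconn hV /andP[hl0 hl1] hr.
have hn : (0 < #|V|)%N by apply: leq_trans hV.
have hnb : forall u : V, (0 < #|nbhd e u|)%N.
  move=> u; have : (0 < #|predC1 u|)%N by rewrite cardC1; case: #|V| hV => [|[|k]].
  case/card_gt0P => y; rewrite !inE => hyu.
  case/connectP: (hconn u y) => [[|z p]] /=; first by move=> _ hy; rewrite hy eqxx in hyu.
  case/andP => hz _ _; apply/card_gt0P; exists z; by rewrite inE.
have key : forall t, 0 <= (r - 1) * (g R V e lam r t S - g R V e lam 1 t S).
  by move=> t; apply: main_ind.
have c1 : cvgn (fun t => g R V e lam r t S) by apply: g_cvg.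
have c2 : cvgn (fun t => g R V e lam 1 t S) by apply: g_cvg.
case: (ltrgtP r 1) => hr1.
- split => // _.
  apply: ler_lim => //; apply: nearW => t.
  have := key t; rewrite /g; nra.
- split => // _.
  apply: ler_lim => //; apply: nearW => t.
  have := key t; rewrite /g; nra.
- by rewrite hr1; split => _ //.
Qed.
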